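(* Consider the protocol $P_{RL}$ with parameter $N$ on a directed ring of size $n$ with $2\le n\le N$. Let $C_0\in\mathcal{C}_{NI}$ (defined in the context). Then no new leader is created in any execution starting from $C_0$: for every configuration $D$ reachable from $C_0$ and every $D'$ with $D\to D'$, every agent with $\mathit{leader}=0$ in $D$ has $\mathit{leader}=0$ in $D'$.
   Context: Model. A population is a directed ring of $n\ge 2$ anonymous agents $u_0,\dots,u_{n-1}$ (indices modulo $n$) with arcs $e_i=(u_i,u_{i+1})$. A configuration $C$ assigns a state to each agent; $C\to C'$ means that $C'$ is obtained from $C$ by one interaction on some arc $e_i$, in which initiator $u_i$ and responder $u_{i+1}$ update their states by the transition function and all other agents keep their states. A configuration is reachable from $C$ if it is obtained from $C$ by finitely many (possibly zero) such steps. Protocol $P_{RL}$ (parameter $N$). Each agent has variables $\mathit{leader}\in\{0,1\}$, $\mathit{bullet}\in\{0,1,2\}$, $\mathit{shield}\in\{0,1\}$, $\mathit{signal}\in\{0,1\}$, $\mathit{dist}\in\{0,\dots,N\}$. In an interaction with initiator $l$ and responder $r$ the following are executed in order: 1. If $l.\mathit{leader}=1$ then $l.\mathit{dist}\gets 0$. 2. If $r.\mathit{leader}=1$ then $r.\mathit{dist}\gets 0$; else if $r.\mathit{bullet}=0$ then $r.\mathit{dist}\gets\min(l.\mathit{dist}+1,N)$. 3. If $r.\mathit{dist}=N$ then $r.\mathit{leader}\gets1$, $r.\mathit{bullet}\gets2$, $r.\mathit{shield}\gets1$, $r.\mathit{signal}\gets0$, $r.\mathit{dist}\gets0$. 4.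 If $l.\mathit{leader}=1$ and $l.\mathit{signal}=1$ then $l.\mathit{bullet}\gets2$, $l.\mathit{shield}\gets1$, $l.\mathit{signal}\gets0$. 5. If $r.\mathit{leader}=1$ and $r.\mathit{signal}=1$ then $r.\mathit{bullet}\gets1$, $r.\mathit{shield}\gets0$, $r.\mathit{signal}\gets0$. 6. If $l.\mathit{bullet}>0$ and $r.\mathit{leader}=1$: set $r.\mathit{leader}\gets0$ if ($l.\mathit{bullet}=2$ and $r.\mathit{shield}=0$); then $l.\mathit{bullet}\gets0$. Else, if $l.\mathit{bullet}>0$ and $r.\mathit{leader}=0$: if $r.\mathit{bullet}=0$ then $r.\mathit{bullet}\gets l.\mathit{bullet}$; then $l.\mathit{bullet}\gets0$ and $r.\mathit{signal}\gets0$. 7. $l.\mathit{signal}\gets\max(l.\mathit{signal},r.\mathit{signal},r.\mathit{leader})$. An agent is a leader if $\mathit{leader}=1$ and a follower otherwise. Definitions (in a configuration with at least one leader). $\mathrm{dist}_L(i)=\min\{j\ge0: u_{i-j}.\mathit{leader}=1\}$ and $\mathrm{dist}_R(i)=\min\{j\ge0: u_{i+j}.\mathit{leader}=1\}$. $\mathrm{peaceful}(i)$ holds iff $u_{i-\mathrm{dist}_L(i)}.\mathit{shield}=1$ and $u_{i-j}.\mathit{signal}=0$ for all $0\le j\le\mathrm{dist}_L(i)$. $\mathrm{modest}(i)$ holds iff $\mathrm{peaceful}(i)$ holds and $u_{i-j}.\mathit{dist}\le\mathrm{dist}_L(i-j)$ for all $0\le j\le\mathrm{dist}_L(i)$. $\mathrm{secure}(i)$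 holds iff $u_i.\mathit{dist}=0$ when $u_i.\mathit{leader}=1$, and $u_i.\mathit{dist}\le N-\mathrm{dist}_R(i)$ when $u_i.\mathit{leader}=0$. $\mathcal{C}_{PB}$ is the set of configurations with at least one leader in which every $u_j$ with $u_j.\mathit{bullet}=2$ satisfies $\mathrm{peaceful}(j)$. $\mathcal{C}_{NI}$ is the set of configurations in $\mathcal{C}_{PB}$ in which every agent $u_i$ satisfies $\mathrm{secure}(i)$ and every $u_j$ with $u_j.\mathit{bullet}=2$ satisfies $\mathrm{modest}(j)$. *)

(* Defs.v *)
From mathcomp Require Import all_boot.
Set Implicit Arguments. Unset Strict Implicit. Unset Printing Implicit Defensive.

(* Agent state; leader/shield/signal in {0,1} are booleans (1 = true),
   bullet in {0,1,2} is 'I_3, dist in {0..N} is 'I_N.+1. *)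
Record State (N : nat) := mkS {
  leader : bool; bullet : 'I_3; shield : bool; signal : bool; dist : 'I_N.+1 }.

Section Protocol.
Variable N : nat.
Notation S := (State N).

Definition set_dist (s : S) (d : 'I_N.+1) : S :=
  mkS (leader s) (bullet s) (shield s) (signal s) d.
Definition set_bss (s : S) (b : 'I_3) (sh sg : bool) : S :=
  mkS (leader s) b sh sg (dist s).
Definition set_leader (s : S) (x : bool) : S :=
  mkS x (bullet s) (shield s) (signal s) (dist s).
Definition set_bullet (s : S) (b : 'I_3) : S :=
  mkS (leader s) b (shield s) (signal s) (dist s).
Definition set_signal (s : S) (x : bool) : S :=
  mkS (leader s) (bullet s) (shield s) x (dist s).

(* The transition function: initiator l, responder r; steps 1..7 in order. *)
Definition delta (l r : S) : S * S :=
  let l1 := if leader l then set_dist l ord0 else l in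
  let r2 := if leader r then set_dist r ord0
            else if (bullet r : nat) == 0 then set_dist r (inord (minn (dist l1).+1 N))
            else r in
  let r3 := if (dist r2 : nat) == N then mkS true (inord 2) true false ord0 else r2 in
  let l4 := if leader l1 && signal l1 then set_bss l1 (inord 2) true false else l1 in
  let r5 := if leader r3 && signal r3 then set_bss r3 (inord 1) false false else r3 in
  let '(l6, r6) :=
    if (0 < bullet l4) && leader r5 then
      (set_bullet l4 ord0,
       if ((bullet l4 : nat) == 2) && ~~ shield r5 then set_leader r5 false else r5)
    else if (0 < bullet l4) && ~~ leader r5 then
      (set_bullet l4 ord0,
       set_signal (if (bullet r5 : nat) == 0 then set_bullet r5 (bullet l4) else r5) false)
    else (l4, r5) in
  let l7 := set_signal l6 [|| signal l6, signal r6 | leader r6] in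
  (l7, r6).

End Protocol.

Lemma ord_pos n (i : 'I_n) : 0 < n.
Proof. exact: (leq_ltn_trans (leq0n i) (ltn_ord i)). Qed.

(* u_{i+k} and u_{i-k}, indices modulo n *)
Definition shift n (i : 'I_n) (k : nat) : 'I_n :=
  Ordinal (ltn_pmod (i + k) (ord_pos i)).
Definition back n (i : 'I_n) (k : nat) : 'I_n := shift i (n - k %% n).

Definition config (N n : nat) := 'I_n -> State N.

Definition step N n (C C' : config N n) : Prop :=
  exists i : 'I_n,
    let j := shift i 1 in
    let p := delta (C i) (C j) in
    forall k : 'I_n, C' k = if k == i then p.1 else if k == j then p.2 else C k.

Inductive reachable N n (C : config N n) : config N n -> Prop :=
| reach_refl : reachable C C
| reach_step D D' : reachable C D -> step D D' -> reachable C D'.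

Section Preds.
Variables N n : nat.
Variable C : config N n.

(* dist_L(i) = min{j >= 0 : u_{i-j}.leader = 1}, dist_R(i) = min{j >= 0 : u_{i+j}.leader = 1};
   computed as the first such j in 0..n-1 (these are only used when a leader exists). *)
Definition distL (i : 'I_n) : nat := find (fun j => leader (C (back i j))) (iota 0 n).
Definition distR (i : 'I_n) : nat := find (fun j => leader (C (shift i j))) (iota 0 n).

Definition peaceful (i : 'I_n) : bool :=
  shield (C (back i (distL i))) &&
  all (fun j => ~~ signal (C (back i j))) (iota 0 (distL i).+1).

Definition modest (i : 'I_n) : bool :=
  peaceful i &&
  all (fun j => (dist (C (back i j)) : nat) <= distL (back i j)) (iota 0 (distL i).+1).

Definition secure (i : 'I_n) : bool :=
  if leader (C i) then (dist (C i) : nat) == 0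
  else (dist (C i) : nat) <= N - distR i.

Definition has_leader : Prop := exists i, leader (C i).

Definition C_PB : Prop :=
  has_leader /\ forall j, (bullet (C j) : nat) = 2 -> peaceful j.

Definition C_NI : Prop :=
  C_PB /\ (forall i, secure i) /\ (forall j, (bullet (C j) : nat) = 2 -> modest j).
End Preds.

(* Main.v *)
Require Import Defs.
From mathcomp Require Import all_boot zify.
Set Warnings "-notation-overridden".
Set Implicit Arguments. Unset Strict Implicit.
Lemma inord2 : ((inord 2 : 'I_3) : nat) = 2. Proof. by rewrite inordK. Qed.
Lemma inord1 : ((inord 1 : 'I_3) : nat) = 1. Proof. by rewrite inordK. Qed.
Lemma inord_min N k : ((inord (minn k N) : 'I_N.+1) : nat) = minn k N.
Proof. rewrite inordK //; lia. Qed.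

Definition L1 N (l : State N) := if leader l then set_dist l ord0 else l.
Definition R2 N (l r : State N) :=
  if leader r then set_dist r ord0
  else if (bullet r : nat) == 0 then set_dist r (inord (minn (dist (L1 l)).+1 N)) else r.
Definition R3 N (l r : State N) :=
  if (dist (R2 l r) : nat) == N then mkS true (inord 2) true false ord0 else R2 l r.
Definition L4 N (l : State N) :=
  if leader (L1 l) && signal (L1 l) then set_bss (L1 l) (inord 2) true false else L1 l.
Definition R5 N (l r : State N) :=
  if leader (R3 l r) && signal (R3 l r) then set_bss (R3 l r) (inord 1) false false else R3 l r.
Definition S6 N (l r : State N) :=
  let l4 := L4 l in let r5 := R5 l r in
    if (0 < bullet l4) && leader r5 then
      (set_bullet l4 ord0,
       if ((bullet l4 : nat) == 2) && ~~ shield r5 then set_leader r5 false else r5)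
    else if (0 < bullet l4) && ~~ leader r5 then
      (set_bullet l4 ord0,
       set_signal (if (bullet r5 : nat) == 0 then set_bullet r5 (bullet l4) else r5) false)
    else (l4, r5).

Lemma deltaE0 N (l r : State N) : delta l r =
  let '(l6, r6) := S6 l r in (set_signal l6 [|| signal l6, signal r6 | leader r6], r6).
Proof. reflexivity. Qed.

Lemma deltaE N (l r : State N) : delta l r =
  (set_signal (S6 l r).1 [|| signal (S6 l r).1, signal (S6 l r).2 | leader (S6 l r).2], (S6 l r).2).
Proof. by rewrite deltaE0; case: (S6 l r). Qed.

Definition dl1 N (l : State N) : nat := if leader l then 0 else dist l.
Definition bl4 N (l : State N) : nat := if leader l && signal l then 2 else bullet l.
Definition newL N (l r : State N) : bool := (dist (R2 l r) : nat) == N.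

Lemma L1_leader N (l : State N) : leader (L1 l) = leader l. Proof. by rewrite /L1; case: ifP. Qed.
Lemma L1_signal N (l : State N) : signal (L1 l) = signal l. Proof. by rewrite /L1; case: ifP. Qed.
Lemma L1_dist N (l : State N) : dist (L1 l) = dl1 l :> nat. Proof. by rewrite /L1 /dl1; case: ifP. Qed.
Lemma L4_leader N (l : State N) : leader (L4 l) = leader l.
Proof. by case: l => [[] b sh [] d]. Qed.
Lemma L4_bullet N (l : State N) : bullet (L4 l) = bl4 l :> nat.
Proof. by case: l => [[] b sh [] d]; rewrite /L4 /L1 /bl4 /= ?inord2. Qed.
Lemma L4_shield N (l : State N) : shield (L4 l) = (leader l && signal l) || shield l.
Proof. by case: l => [[] b sh [] d]. Qed.
Lemma L4_signal N (l : State N) : signal (L4 l) = signal l && ~~ leader l.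
Proof. by case: l => [[] b sh [] d]. Qed.
Lemma L4_dist N (l : State N) : dist (L4 l) = dl1 l :> nat.
Proof. by case: l => [[] b sh [] d]. Qed.

Lemma R2_leader N (l r : State N) : leader (R2 l r) = leader r.
Proof. rewrite /R2; case: ifP => H /=; rewrite ?H //; case: ifP => H2 /=; rewrite ?H ?H2 //. Qed.
Lemma R2_bullet N (l r : State N) : bullet (R2 l r) = bullet r.
Proof. rewrite /R2; case: ifP => H /=; rewrite ?H //; case: ifP => H2 /=; rewrite ?H ?H2 //. Qed.
Lemma R2_signal N (l r : State N) : signal (R2 l r) = signal r.
Proof. rewrite /R2; case: ifP => H /=; rewrite ?H //; case: ifP => H2 /=; rewrite ?H ?H2 //. Qed.
Lemma R2_shield N (l r : State N) : shield (R2 l r) = shield r.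
Proof. rewrite /R2; case: ifP => H /=; rewrite ?H //; case: ifP => H2 /=; rewrite ?H ?H2 //. Qed.
Lemma R2_dist N (l r : State N) : dist (R2 l r) =
  (if leader r then 0 else if (bullet r : nat) == 0 then minn (dl1 l).+1 N else dist r) :> nat.
Proof. rewrite /R2; case: ifP => H /=; rewrite ?H //; case: ifP => H2 /=; rewrite ?H ?H2 ?inord_min ?L1_dist //. Qed.

Lemma R3E N (l r : State N) : ~~ newL l r -> R3 l r = R2 l r.
Proof. by rewrite /R3 /newL => /negbTE ->. Qed.

Lemma R5E N (l r : State N) : ~~ newL l r ->
  R5 l r = if leader r && signal r then set_bss (R2 l r) (inord 1) false false else R2 l r.
Proof. by move=> H; rewrite /R5 R3E // R2_leader R2_signal. Qed.

Lemma R5_leader N (l r : State N) : ~~ newL l r -> leader (R5 l r) = leader r.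
Proof. move=> H; rewrite R5E //; case: ifP => _ /=; by rewrite R2_leader. Qed.
Lemma R5_signal N (l r : State N) : ~~ newL l r -> signal (R5 l r) = signal r && ~~ leader r.
Proof. move=> H; rewrite R5E //; case: (leader r); case Hs: (signal r) => /=; by rewrite ?R2_signal ?Hs. Qed.
Lemma R5_bullet N (l r : State N) : ~~ newL l r ->
  bullet (R5 l r) = (if leader r && signal r then 1 else bullet r) :> nat.
Proof. move=> H; rewrite R5E //; case: ifP => _ /=; by rewrite ?inord1 ?R2_bullet. Qed.
Lemma R5_shield N (l r : State N) : ~~ newL l r ->
  shield (R5 l r) = ~~ (leader r && signal r) && shield r.
Proof. move=> H; rewrite R5E //; case: ifP => _ /=; by rewrite ?R2_shield. Qed.
Lemma R5_dist N (l r : State N) : ~~ newL l r -> dist (R5 l r) = dist (R2 l r).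
Proof. move=> H; rewrite R5E //; by case: ifP. Qed.

Ltac s6t := rewrite deltaE /S6 /=;
  (try rewrite !R5_leader //); rewrite ?L4_bullet;
  case: ifP => [/andP[Hb Hr]|Hn1] /=; [| case: ifP => [/andP[Hb Hr']|Hn2] /=].

Lemma D_leader_l N (l r : State N) : leader (delta l r).1 = leader l.
Proof. rewrite deltaE /S6 /=; case: ifP => _ /=; rewrite ?L4_leader //; case: ifP => _ /=; by rewrite L4_leader. Qed.
Lemma D_bullet_l N (l r : State N) : bullet (delta l r).1 = 0 :> nat.
Proof.
rewrite deltaE /S6 /=; case: ifP => H1 //=; case: ifP => H2 //=.
by move: H1 H2; rewrite L4_bullet; case: (bl4 l) => // b; case: (leader (R5 l r)).
Qed.
Lemma D_dist_l N (l r : State N) : dist (delta l r).1 = dl1 l :> nat.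
Proof. rewrite deltaE /S6 /=; case: ifP => _ /=; rewrite ?L4_dist //; case: ifP => _ /=; by rewrite L4_dist. Qed.
Lemma D_shield_l N (l r : State N) : shield (delta l r).1 = (leader l && signal l) || shield l.
Proof. rewrite deltaE /S6 /=; case: ifP => _ /=; rewrite ?L4_shield //; case: ifP => _ /=; by rewrite L4_shield. Qed.
Lemma D_signal_l N (l r : State N) : signal (delta l r).1 =
  [|| signal l && ~~ leader l, signal (delta l r).2 | leader (delta l r).2].
Proof. rewrite deltaE /S6 /=; case: ifP => _ /=; rewrite ?L4_signal //; case: ifP => _ /=; by rewrite L4_signal. Qed.

Lemma D_leader_r N (l r : State N) : ~~ newL l r -> leader (delta l r).2 =
  leader r && ~~ ((bl4 l == 2) && ~~ (~~ (leader r && signal r) && shield r)).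
Proof.
move=> H; rewrite deltaE /S6 /= R5_leader // L4_bullet.
case: ifP => [/andP[Hb Hr]|Hn1] /=.
  rewrite Hr /= R5_shield // Hr /=; case: ifP => _ /=; rewrite ?R5_leader //.
case: ifP => [/andP[Hb Hr]|Hn2] /=.
  by rewrite (negbTE Hr) /=; case: ifP => _ /=; rewrite R5_leader // (negbTE Hr).
rewrite R5_leader //; case: (leader r) Hn1 Hn2 => //=; rewrite !andbT !andbF.
by case: (bl4 l).
Qed.
Lemma D_signal_r N (l r : State N) : ~~ newL l r -> signal (delta l r).2 =
  signal r && ~~ leader r && ~~ (0 < bl4 l).
Proof.
move=> H; rewrite deltaE /S6 /= R5_leader // L4_bullet.
case: ifP => [/andP[Hb Hr]|Hn1] /=.
  rewrite Hb Hr /=; case: ifP => _ /=; by rewrite R5_signal // Hr /= andbF.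
case: ifP => [/andP[Hb Hr]|Hn2] /=.
  by rewrite Hb /= andbF.
rewrite R5_signal //; case: (leader r) Hn1 Hn2 => //=; rewrite ?andbT ?andbF ?andbF.
  by move=> -> _.
by move=> _ ->; rewrite andbT.
Qed.
Lemma D_dist_r N (l r : State N) : ~~ newL l r -> dist (delta l r).2 = dist (R2 l r).
Proof.
move=> H; rewrite deltaE /S6 /=.
case: ifP => _ /=; first by case: ifP => _ /=; rewrite R5_dist.
case: ifP => _ /=; last by rewrite R5_dist.
by case: ifP => _ /=; rewrite R5_dist.
Qed.
Lemma D_shield_r N (l r : State N) : ~~ newL l r -> shield (delta l r).2 =
  ~~ (leader r && signal r) && shield r.
Proof.
move=> H; rewrite deltaE /S6 /=.
case: ifP => _ /=; first by case: ifP => _ /=; rewrite R5_shield.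
case: ifP => _ /=; last by rewrite R5_shield.
by case: ifP => _ /=; rewrite R5_shield.
Qed.
Lemma D_bullet_r N (l r : State N) : ~~ newL l r -> bullet (delta l r).2 =
  (if leader r then (if signal r then 1 else bullet r)
   else if (0 < bl4 l) && ((bullet r : nat) == 0) then bl4 l else bullet r) :> nat.
Proof.
move=> H; rewrite deltaE /S6 /= R5_leader // L4_bullet.
case: ifP => [/andP[Hb Hr]|Hn1] /=.
  by rewrite Hr; case: ifP => _ /=; rewrite R5_bullet // Hr.
case: ifP => [/andP[Hb Hr]|Hn2] /=.
  rewrite (negbTE Hr) Hb R5_bullet // (negbTE Hr) /=.
  by case: ifP => _ /=; rewrite ?L4_bullet // R5_bullet // (negbTE Hr).
rewrite R5_bullet //; case: (leader r) Hn1 Hn2 => //=; rewrite ?andbT ?andbF.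
by move=> _ /negbT; rewrite -leqNgt leqn0 => /eqP ->.
Qed.

Lemma modR1 n q w : 0 < n -> q < n -> (w %% n == q) = ((w.+1) %% n == q.+1 %% n).
Proof.
move=> Hn Hq; rewrite -addn1 -(addn1 q) eqn_modDr.
by rewrite (modn_small Hq).
Qed.

Lemma modR5 n a b c : ((a + c) %% n == (b + c) %% n) = (a %% n == b %% n).
Proof. by rewrite eqn_modDr. Qed.

Lemma modR2 n w u v : u < v -> v < u + n -> (w + u) %% n != (w + v) %% n.
Proof.
move=> Huv Hvn; have -> : w + v = (w + u) + (v - u) by lia.
rewrite -{1}(addn0 (w + u)) eqn_modDl mod0n eq_sym.
rewrite modn_small; [lia|lia].
Qed.

Lemma modn_addn n k : (k + n) %% n = k %% n.
Proof. by rewrite modnDr. Qed.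

Definition follow N (G : nat -> State N) p m := forall t, t < m -> ~~ leader (G (p + t)).
Definition Inv2 N (G : nat -> State N) := forall p m, follow G p m -> dist (G p) + m <= N.
Definition Inv3 N (G : nat -> State N) := forall s m, leader (G s) -> follow G s.+1 m ->
  (bullet (G (s + m)) : nat) = 2 ->
  shield (G s) /\ (forall u, u <= m -> ~~ signal (G (s + u)) /\ dist (G (s + u)) <= u).
Definition periodic n N (G : nat -> State N) := forall k, G k = G (k %% n).

Lemma per_add n N (G : nat -> State N) k : periodic n G -> G (k + n) = G k.
Proof. by move=> HP; rewrite HP modn_addn -HP. Qed.

Lemma per_eq n N (G : nat -> State N) a b : periodic n G -> a %% n = b %% n -> G a = G b.
Proof. by move=> HP E; rewrite HP E -HP. Qed.

Lemma follow_lt n N (G : nat -> State N) s m : 0 < n -> periodic n G -> leader (G s) ->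
  follow G s.+1 m -> m < n.
Proof.
move=> Hn HP Hs Hf; rewrite ltnNge; apply/negP => Hm.
have := Hf n.-1 ltac:(lia).
have -> : s.+1 + n.-1 = s + n by lia.
by rewrite per_add // Hs.
Qed.

Lemma left_leader n N (G : nat -> State N) a k : 0 < n -> periodic n G -> leader (G a) ->
  exists s d, [/\ s + d = k + n, d < n, leader (G s) & follow G s.+1 d].
Proof.
move=> Hn HP Ha.
pose P := fun d => (d < n) && leader (G (k + n - d)).
have ex : exists d, P d.
  exists ((k + (n - a %% n)) %% n); apply/andP; split; first by rewrite ltn_mod.
  set d := (k + (n - a %% n)) %% n.
  have Hd : d < n by rewrite ltn_mod.
  suff -> : G (k + n - d) = G a by [].
  apply: per_eq => //; apply/eqP; rewrite -(modR5 _ _ _ d).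
  have -> : k + n - d + d = k + n by lia.
  rewrite /d modnDmr.
  have Ham : a %% n < n by rewrite ltn_mod.
  have -> : a + (k + (n - a %% n)) = (a %/ n * n) + (k + n) by rewrite {1}(divn_eq a n); lia.
  by rewrite modnMDl.
case: (ex_minnP ex) => d /andP [Hdn Hl] Hmin.
exists (k + n - d), d; split => //; first lia.
move=> t Ht; apply/negP => Hlt.
have : d <= d.-1 - t.
  apply: Hmin; apply/andP; split; first lia.
  by have -> : k + n - (d.-1 - t) = (k + n - d).+1 + t by lia.
lia.
Qed.

Definition dl1_le N (l : State N) : dl1 l <= dist l.
Proof. by rewrite /dl1; case: ifP. Qed.

Lemma nonew n N (G : nat -> State N) q : 2 <= n -> n <= N -> periodic n G -> Inv2 G ->
  ~~ newL (G q) (G q.+1).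
Proof.
move=> Hn2 HnN HP I2; rewrite /newL R2_dist.
case: ifP => Hr; first lia.
case: ifP => Hb; last first.
  have H : follow G q.+1 1 by move=> [|t] // _; rewrite addn0 Hr.
  have := I2 _ _ H; lia.
rewrite /dl1; case: ifP => Hl; first lia.
have H : follow G q 2 by move=> [|[|t]] // _; rewrite ?addn0 ?addn1 ?Hl ?Hr.
have := I2 _ _ H; lia.
Qed.


Ltac clear_mod := repeat match goal with H : context [_ %% _] |- _ => clear H end.
Ltac slia := clear_mod; lia.


Definition stepG n N (G G' : nat -> State N) q := forall w, G' w =
  if w %% n == q then (delta (G q) (G q.+1)).1
  else if w %% n == q.+1 %% n then (delta (G q) (G q.+1)).2 else G w.

Lemma stepG_per n N (G G' : nat -> State N) q : 0 < n -> periodic n G -> stepG n G G' q -> periodic n G'.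
Proof. by move=> Hn HP HG w; rewrite !HG modn_mod -HP. Qed.

Lemma stepG_Gl n N (G : nat -> State N) q w : q < n -> periodic n G -> w %% n = q -> G w = G q.
Proof. by move=> Hq HP E; apply: per_eq => //; rewrite E modn_small. Qed.

Lemma stepG_Gr n N (G : nat -> State N) q w : periodic n G -> w %% n = q.+1 %% n -> G w = G q.+1.
Proof. by move=> HP E; apply: per_eq. Qed.

Lemma stepG_LG n N (G G' : nat -> State N) q w : q < n -> periodic n G -> stepG n G G' q ->
  w %% n != q.+1 %% n -> leader (G' w) = leader (G w).
Proof.
move=> Hq HP HG Hw; rewrite HG; case: ifP => H; last by rewrite (negbTE Hw).
by rewrite D_leader_l (stepG_Gl Hq HP (eqP H)).
Qed.

Lemma qq1 n q : 2 <= n -> q %% n != q.+1 %% n.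
Proof. move=> Hn; have := @modR2 n q 0 1; rewrite addn0 addn1; apply; slia. Qed.

Lemma q1q n q : 2 <= n -> q < n -> (q.+1 %% n == q) = false.
Proof. move=> Hn Hq; apply/negP => /eqP E; move: (qq1 q Hn); rewrite E modn_small // eqxx. done. Qed.

Lemma pres2 n N (G G' : nat -> State N) q : 2 <= n -> n <= N -> q < n -> periodic n G ->
  stepG n G G' q -> Inv2 G -> Inv3 G -> Inv2 G'.
Proof.
move=> Hn2 HnN Hq HP HG I2 I3.
have Hn : 0 < n by slia.
have NN := nonew q Hn2 HnN HP I2.
have HP' := stepG_per Hn HP HG.
have Gl := stepG_Gl Hq HP.
have Gr : forall w, w %% n = q.+1 %% n -> G w = G q.+1 := fun w => @stepG_Gr _ _ G q w HP.
have LG := stepG_LG Hq HP HG.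
have Hqq := qq1 q Hn2.
move=> p [|m] Hf; first by have := ltn_ord (dist (G' p)); slia.
have Hp : ~~ leader (G' p) by have := Hf 0 erefl; rewrite addn0.
case Hk: (leader (G q.+1) && ~~ leader (delta (G q) (G q.+1)).2).
-
  move/andP: Hk => [Hr Hr6].
  have := D_leader_r NN; rewrite Hr (negbTE Hr6) /= => /esym/negbFE/andP [Hbl Hsh].
  case: (boolP [exists t : 'I_m.+1, (p + t) %% n == q.+1 %% n]) => Hex; last first.
    have Hf0 : follow G p m.+1.
      move=> t Ht; rewrite -LG; first exact: Hf.
      by apply/negP => E; move/negP: Hex; apply; apply/existsP; exists (Ordinal Ht).
    have Hp1 : p %% n != q.+1 %% n.
      by apply/negP => E; move/negP: Hex; apply; apply/existsP; exists ord0; rewrite addn0.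
    have := I2 _ _ Hf0; rewrite HG; case: ifP => Hpq; last by rewrite (negbTE Hp1).
    rewrite D_dist_l -(Gl p (eqP Hpq)); have := dl1_le (G p); slia.
  case/existsP: Hex => [[t0 Ht0]] /= /eqP Ept0.
  have [s [d [Hsd Hdn Hs Hfs]]] := left_leader q Hn HP Hr.
  have Gsd : G (s + d) = G q by rewrite Hsd per_add.
  have Hsr : s %% n != q.+1 %% n.
    case: d Hsd Hdn Hfs Gsd => [|d] Hsd Hdn Hfs Gsd.
      by rewrite addn0 in Hsd; rewrite Hsd modn_addn.
    have Hl : ~~ leader (G q) by rewrite -Gsd; have := Hfs d (ltnSn d); rewrite addSnnS.
    have Hbl2 : (bullet (G (s + d.+1)) : nat) = 2 by rewrite Gsd; move: Hbl; rewrite /bl4 (negbTE Hl) /= => /eqP.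
    have [Hsh1 Hu] := I3 _ _ Hs Hfs Hbl2.
    have [Hsg _] := Hu 0 erefl; rewrite addn0 in Hsg.
    apply/negP => /eqP E; move: Hsh; rewrite -(Gr s E) Hsh1 (negbTE Hsg) /=; done.
  have HsL : leader (G' s) by rewrite LG.
  have Ht0d : t0 <= d.
    rewrite leqNgt; apply/negP => Hlt.
    have E : (p + (t0 - d.+1)) %% n = s %% n.
      apply/eqP; rewrite -(modR5 _ _ _ d.+1).
      have -> : p + (t0 - d.+1) + d.+1 = p + t0 by slia.
      by rewrite Ept0 addnS Hsd -addSn modn_addn.
    have := Hf (t0 - d.+1) ltac:(slia); by rewrite (per_eq HP' E) HsL.
  have [ps Eps0] : {ps | ps = s + d.+1 - t0} by exists (s + d.+1 - t0).
  have Hps : ps %% n = p %% n.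
    apply/eqP; rewrite -(modR5 _ _ _ t0).
    have -> : ps + t0 = (q + n).+1 by rewrite Eps0; slia.
    by rewrite Ept0 -addSn modn_addn.
  have Hfps : follow G' ps m.+1.
    move=> t Ht; rewrite (@per_eq n _ G' _ (p + t)) //; first exact: Hf.
    by apply/eqP; rewrite modR5 Hps.
  have Hm : m.+1 <= n - d.+1 + t0.
    rewrite leqNgt; apply/negP => Hlt.
    have := Hfps (n - d.+1 + t0) Hlt.
    have -> : ps + (n - d.+1 + t0) = s + n by rewrite Eps0; slia.
    by rewrite (per_add _ HP') HsL.
  have Hd : dist (G' p) <= d.+1 - t0.
    rewrite (per_eq HP' (esym Hps)).
    case: t0 Ht0 Ept0 Ht0d Hps Hfps Hm Eps0 => [|t0] Ht0 Ept0 Ht0d Hps Hfps Hm Eps0.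
      rewrite HG.
      have Eq1 : ps %% n = q.+1 %% n by rewrite Eps0 subn0 addnS Hsd -addSn modn_addn.
      rewrite Eq1 q1q // eqxx.
      rewrite D_dist_r // R2_dist Hr; slia.
    have Hd1 : 0 < d by slia.
    have Hl : ~~ leader (G q).
      by rewrite -Gsd; have := Hfs d.-1 ltac:(slia); have -> : s.+1 + d.-1 = s + d by slia.
    have Hbl2 : (bullet (G (s + d)) : nat) = 2 by rewrite Gsd; move: Hbl; rewrite /bl4 (negbTE Hl) /= => /eqP.
    have Hfs' : follow G s.+1 d by [].
    have [_ Hu] := I3 _ _ Hs Hfs' Hbl2.
    have [_ Hdu] := Hu (d - t0) ltac:(slia).
    have Eps : ps = s + (d - t0) by rewrite Eps0; slia.
    rewrite Eps HG.
    have Hne : (s + (d - t0)) %% n != q.+1 %% n.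
      have := @modR2 n s (d - t0) d.+1 ltac:(slia) ltac:(slia).
      by rewrite addnS Hsd -addSn modn_addn.
    rewrite (negbTE Hne); case: ifP => Hpq //.
      rewrite D_dist_l -(Gl _ (eqP Hpq)); have := dl1_le (G (s + (d - t0))); slia.
  slia.
-
  have LE : forall w, leader (G' w) = leader (G w).
    move=> w; case: (boolP (w %% n == q.+1 %% n)) => Hw; last exact: LG.
    rewrite HG (Gr w (eqP Hw)) (eqP Hw) q1q // eqxx.
    move: Hk; rewrite D_leader_r //.
    by case: (leader (G q.+1)) => //=; rewrite negbK => ->.
  have Hf0 : follow G p m.+1 by move=> t Ht; rewrite -LE; apply: Hf.
  have Hp0 : ~~ leader (G p) by rewrite -LE.
  have := I2 _ _ Hf0; rewrite HG; case: ifP => Hpq.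
    rewrite D_dist_l -(Gl p (eqP Hpq)) /dl1 (negbTE Hp0); slia.
  case: ifP => Hpq1 //.
  rewrite D_dist_r // R2_dist -(Gr p (eqP Hpq1)) (negbTE Hp0).
  case: ifP => Hb //.
  case Hlq : (leader (G q)).
    rewrite /dl1 Hlq.
    suff : m.+1 < n by slia.
    rewrite ltnNge; apply/negP => Hmn.
    have := Hf n.-1 ltac:(slia); rewrite HG.
    have -> : (p + n.-1) %% n == q.
      by rewrite (modR1 _ Hn Hq) -addnS prednK // modn_addn Hpq1.
    by rewrite D_leader_l Hlq.
  have Hfl : follow G (p + n.-1) m.+2.
    move=> [|t] Ht; first by rewrite addn0 (Gl (p + n.-1)) ?Hlq //; apply/eqP; rewrite (modR1 _ Hn Hq) -addnS prednK // modn_addn Hpq1.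
    have -> : p + n.-1 + t.+1 = (p + t) + n by slia.
    by rewrite per_add //; apply: Hf0.
  have := I2 _ _ Hfl.
  rewrite (Gl (p + n.-1)); last by apply/eqP; rewrite (modR1 _ Hn Hq) -addnS prednK // modn_addn Hpq1.
  rewrite /dl1 Hlq; slia.
Qed.

Lemma pres3 n N (G G' : nat -> State N) q : 2 <= n -> n <= N -> q < n -> periodic n G ->
  stepG n G G' q -> Inv2 G -> Inv3 G -> Inv3 G'.
Proof.
move=> Hn2 HnN Hq HP HG I2 I3.
have Hn : 0 < n by slia.
have NN := nonew q Hn2 HnN HP I2.
have HP' := stepG_per Hn HP HG.
have Gl := stepG_Gl Hq HP.
have Gr : forall w, w %% n = q.+1 %% n -> G w = G q.+1 := fun w => @stepG_Gr _ _ G q w HP.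
have LG := stepG_LG Hq HP HG.
have Hq1q : (q.+1 %% n == q) = false.
  by apply/negP => /eqP E; move: (qq1 q Hn2); rewrite E modn_small // eqxx.
have G'l : forall w, w %% n == q -> G' w = (delta (G q) (G q.+1)).1 by move=> w E; rewrite HG E.
have G'r : forall w, w %% n == q.+1 %% n -> G' w = (delta (G q) (G q.+1)).2.
  by move=> w E; rewrite HG E (eqP E) Hq1q.
have G'o : forall w, w %% n != q -> w %% n != q.+1 %% n -> G' w = G w.
  by move=> w E1 E2; rewrite HG (negbTE E1) (negbTE E2).
move=> s m HL' HF' HB'.
have Hmn : m < n := follow_lt Hn HP' HL' HF'.
have Eend : (s + m) %% n != q.
  by apply/negP => E; move: HB'; rewrite G'l // D_bullet_l.
have LW : forall u, u <= m -> leader (G (s + u)) = leader (G' (s + u)).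
  move=> u Hu; case: (boolP ((s + u) %% n == q.+1 %% n)) => Hw; last by rewrite LG.
  rewrite G'r // (Gr _ (eqP Hw)) D_leader_r //.
  case Hr: (leader (G q.+1)) => //=.
  case: u Hu Hw => [|u] Hu Hw.
    move: HL'; rewrite addn0 in Hw *; rewrite G'r // D_leader_r // Hr /=.
    by move=> ->.
  (* u >= 1 : show shield r and ~~ signal r via I3 *)
  have Hfr : follow G (s + u.+1).+1 (m - u.+1).
    move=> t Ht; rewrite -LG.
      by have := HF' (u.+1 + t) ltac:(slia); rewrite addnA addSn addnS.
    have := @modR2 n (s + u.+1) 0 t.+1 ltac:(slia) ltac:(slia).
    by rewrite addn0 (eqP Hw) addnS -addSn eq_sym.
  have Hbr : (bullet (G (s + u.+1 + (m - u.+1))) : nat) = 2.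
    have -> : s + u.+1 + (m - u.+1) = s + m by slia.
    case: (ltngtP u.+1 m) Hu => // [Hlt|Heq] _.
      have Hne : (s + m) %% n != q.+1 %% n.
        have := @modR2 n s u.+1 m Hlt ltac:(slia); by rewrite (eqP Hw) eq_sym.
      by rewrite -G'o.
    rewrite -Heq (Gr _ (eqP Hw)); move: HB'; rewrite -Heq G'r // D_bullet_r // Hr.
    by case: (signal (G q.+1)).
  have Hlr : leader (G (s + u.+1)) by rewrite (Gr _ (eqP Hw)).
  have [Hsh Hu0] := I3 _ _ Hlr Hfr Hbr.
  have [Hsg _] := Hu0 0 erefl.
  rewrite addn0 (Gr _ (eqP Hw)) in Hsg Hsh.
  by rewrite Hsh (negbTE Hsg) /= andbF.
have HLs : leader (G s) by rewrite -(addn0 s) LW // addn0.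
have HFs : follow G s.+1 m.
  by move=> t Ht; rewrite addSnnS LW // -addSnnS; apply: HF'.
pose mv := [&& (s + m) %% n == q.+1 %% n, ~~ leader (G q.+1), (bullet (G q.+1) : nat) == 0 & bl4 (G q) == 2].
have MVm : mv -> 0 < m.
  move=> Hmv; rewrite lt0n; apply/negP => /eqP Hm0; move: Hmv.
  rewrite /mv Hm0 addn0 => /and4P [E Hr _ _].
  by move: Hr; rewrite -(Gr _ (eqP E)) HLs.
have MVq : mv -> (s + m.-1) %% n == q.
  move=> Hmv; have Hm0 := MVm Hmv; case/and4P: Hmv => E _ _ _.
  by rewrite (modR1 _ Hn Hq) -addnS prednK.
have MVl : mv -> leader (G q) -> m = 1.
  move=> Hmv Hl; have Hm0 := MVm Hmv; have Eq := MVq Hmv.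
  apply/eqP; rewrite eqn_leq Hm0 andbT leqNgt; apply/negP => Hm2.
  have := HFs (m.-2) ltac:(slia).
  have -> : s.+1 + m.-2 = s + m.-1 by slia.
  by rewrite (Gl _ (eqP Eq)) Hl.
have [SH FA] : (shield (G s) \/ [&& mv, leader (G q) & signal (G q)]) /\
  (forall u, u <= m -> (mv -> u < m /\ ~~ leader (G q)) -> ~~ signal (G (s + u)) /\ dist (G (s + u)) <= u).
  case: (boolP ((s + m) %% n == q.+1 %% n)) => Ee; last first.
    have Hb : (bullet (G (s + m)) : nat) = 2 by rewrite -G'o.
    have [H1 H2] := I3 _ _ HLs HFs Hb.
    by split; [left|move=> u Hu _; apply: H2].
  move: HB'; rewrite G'r // D_bullet_r //.
  case Hr: (leader (G q.+1)) => /=.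
    move=> Hb.
    have Hb2 : (bullet (G (s + m)) : nat) = 2.
      by rewrite (Gr _ (eqP Ee)); move: Hb; case: (signal (G q.+1)).
    have [H1 H2] := I3 _ _ HLs HFs Hb2.
    by split; [left|move=> u Hu _; apply: H2].
  case: ifP => Hc Hb; last first.
    have Hmv : ~~ mv by rewrite /mv Ee Hr /=; move: Hc Hb; case: (bullet (G q.+1) : nat) => //=; case: (bl4 (G q)) => //= ? ? ->.
    have Hb2 : (bullet (G (s + m)) : nat) = 2 by rewrite (Gr _ (eqP Ee)).
    have [H1 H2] := I3 _ _ HLs HFs Hb2.
    by split; [left|move=> u Hu _; apply: H2].
  have Hmv : mv by rewrite /mv Ee Hr /=; case/andP: Hc => _ ->; rewrite Hb.
  have Hm0 := MVm Hmv; have Eq := MVq Hmv.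
  case Hl: (leader (G q)).
    have Hm1 := MVl Hmv Hl.
    split; last by move=> u _ /(_ Hmv) [_ []].
    case Hsg: (signal (G q)); first by right; rewrite Hmv.
    left.
    have Gs : G s = G q by apply: Gl; move: Eq; rewrite Hm1 addn0 => /eqP.
    have Hb2 : (bullet (G (s + 0)) : nat) = 2.
      by rewrite addn0 Gs; move: Hb; rewrite /bl4 Hl Hsg.
    have Hf0 : follow G s.+1 0 by move=> t; rewrite ltn0.
    have [H1 _] := I3 _ _ HLs Hf0 Hb2.
    done.
  have Hfm : follow G s.+1 m.-1 by move=> t Ht; apply: HFs; slia.
  have Hb2 : (bullet (G (s + m.-1)) : nat) = 2.
    by rewrite (Gl _ (eqP Eq)); move: Hb; rewrite /bl4 Hl.
  have [H1 H2] := I3 _ _ HLs Hfm Hb2.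
  split; first by left.
  move=> u Hu /(_ Hmv) [Hum _]; apply: H2; slia.
have MVnot : mv -> leader (G q) -> forall u, u <= m -> (s + u) %% n != q -> (s + u) %% n != q.+1 %% n -> False.
  move=> Hmv Hl u Hu E1 E2; have Hm1 := MVl Hmv Hl; have Eq := MVq Hmv.
  case/and4P: Hmv => Ee _ _ _.
  case: u Hu E1 E2 => [|u] Hu E1 E2.
    by move: Eq; rewrite Hm1 addn0 -(addn0 s) (negbTE E1).
  have Hu1 : u = 0 by slia.
  by move: E2; rewrite Hu1 -Hm1 Ee.
split.
-
  case: (boolP (s %% n == q)) => E1.
    rewrite G'l // D_shield_l.
    case: SH => [|/and3P [_ -> ->] //].
    by rewrite (Gl _ (eqP E1)) => ->; rewrite orbT.
  case: (boolP (s %% n == q.+1 %% n)) => E2.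
    have Hmv : ~~ mv.
      by rewrite /mv -(Gr _ (eqP E2)) HLs /= andbF.
    case: SH => [Hsh|/and3P [Hm _ _]]; last by rewrite Hm in Hmv.
    have [Hsg _] := FA 0 (leq0n m) (fun H => False_ind _ (negP Hmv H)).
    rewrite addn0 in Hsg.
    by rewrite G'r // D_shield_r // -(Gr _ (eqP E2)) Hsh (negbTE Hsg) andbF.
  rewrite G'o //.
  case: SH => [//|/and3P [Hmv Hl _]].
  by case: (MVnot Hmv Hl 0 (leq0n m)); rewrite addn0.
- move=> u Hu.
  case: (boolP ((s + u) %% n == q)) => E1.
    have Hum : u < m by case: (ltngtP u m) Hu => // Heq _; move: Eend; rewrite -Heq E1.
    have E2 : (s + u).+1 %% n == q.+1 %% n by rewrite -(modR1 _ Hn Hq).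
    have Gsu : G (s + u) = G q by apply: Gl; apply/eqP.
    have Gsu1 : G (s + u).+1 = G q.+1 by apply: Gr; apply/eqP.
    have Hr : ~~ leader (G q.+1).
      by rewrite -Gsu1 -addnS LW //; have := HF' u Hum; rewrite addSnnS.
    rewrite G'l // D_signal_l D_dist_l D_leader_r // D_signal_r // (negbTE Hr) /= andbT orbF.
    split.
      apply/norP; split.
        case Hl: (leader (G q)); first by rewrite andbF.
        have [Hsg _] := FA u Hu (fun Hmv => conj Hum (negbT Hl)).
        by rewrite -Gsu (negbTE Hsg).
      case: (boolP mv) => Hmv.
        by move: Hmv; rewrite /mv => /and4P [_ _ _ /eqP ->]; rewrite andbF.
      have [Hsg _] := FA u.+1 Hum (fun H => False_ind _ (negP Hmv H)).
      by rewrite addnS Gsu1 in Hsg; rewrite (negbTE Hsg).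
    rewrite /dl1; case Hl: (leader (G q)) => //.
    have [_ Hd] := FA u Hu (fun Hmv => conj Hum (negbT Hl)).
    by rewrite -Gsu.
  case: (boolP ((s + u) %% n == q.+1 %% n)) => E2; last first.
    rewrite G'o //; apply: FA => // Hmv; split.
      by case: (ltngtP u m) Hu => // Heq _; move: E2; case/and4P: Hmv; rewrite Heq => ->.
    by apply/negP => Hl; apply: (MVnot Hmv Hl u Hu E1 E2).
  have Gsu : G (s + u) = G q.+1 by apply: Gr; apply/eqP.
  rewrite G'r // D_signal_r // D_dist_r // R2_dist.
  case: u Hu E1 E2 Gsu => [|u] Hu E1 E2 Gsu.
    by rewrite addn0 in Gsu; rewrite -Gsu HLs /= andbF.
  have Hr : ~~ leader (G q.+1) by rewrite -Gsu LW // -addSnnS; apply: HF'; slia.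
  have Eq : (s + u) %% n == q by rewrite (modR1 _ Hn Hq) -addnS.
  have Gsu' : G (s + u) = G q by apply: Gl; apply/eqP.
  rewrite (negbTE Hr) /= andbT.
  have FAl : ~~ leader (G q) -> dist (G q) <= u.
    move=> Hl; have [_ Hd] := FA u (ltnW Hu) (fun _ => conj Hu Hl).
    by rewrite -Gsu'.
  case: (boolP mv) => Hmv.
    case/and4P: Hmv => _ _ /eqP Hb0 /eqP Hb2.
    rewrite Hb2 Hb0 /= andbF; split => //.
    rewrite /dl1; case Hl: (leader (G q)); first slia.
    have := FAl (negbT Hl); slia.
  have [Hsg Hd] := FA u.+1 Hu (fun H => False_ind _ (negP Hmv H)).
  rewrite Gsu in Hsg Hd; rewrite (negbTE Hsg) /=; split => //.
  case: ifP => _ //.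
  rewrite /dl1; case Hl: (leader (G q)); first slia.
  have := FAl (negbT Hl); slia.
Qed.


Definition pos n (Hn : 0 < n) k : 'I_n := Ordinal (ltn_pmod k Hn).
Definition gC N n (Hn : 0 < n) (C : config N n) : nat -> State N := fun k => C (pos Hn k).

Lemma gC_per N n (Hn : 0 < n) (C : config N n) : periodic n (gC Hn C).
Proof. by move=> k; rewrite /gC; congr C; apply: val_inj; rewrite /= modn_mod. Qed.

Lemma gC_ord N n (Hn : 0 < n) (C : config N n) (i : 'I_n) : gC Hn C i = C i.
Proof. by rewrite /gC; congr C; apply: val_inj; rewrite /= modn_small. Qed.

Lemma shift_pos n (Hn : 0 < n) a t : shift (pos Hn a) t = pos Hn (a + t).
Proof. by apply: val_inj; rewrite /= modnDml. Qed.

Lemma back_pos n (Hn : 0 < n) a t : t <= a -> t < n -> back (pos Hn a) t = pos Hn (a - t).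
Proof.
move=> Hta Htn; apply: val_inj; rewrite /back /= modnDml (modn_small Htn).
have -> : a + (n - t) = (a - t) + n by slia.
by rewrite modn_addn.
Qed.

Lemma find_eq (a : pred nat) n m : m < n -> a m -> (forall t, t < m -> ~~ a t) ->
  find a (iota 0 n) = m.
Proof.
move=> Hmn Ham Hlt.
have Hhas : has a (iota 0 n) by apply/hasP; exists m => //; rewrite mem_iota; slia.
have Hf := has_find a (iota 0 n); rewrite Hhas size_iota in Hf.
case: (ltngtP (find a (iota 0 n)) m) => // H.
  have := nth_find 0 Hhas; rewrite nth_iota ?add0n; last by rewrite -Hf.
  by move=> Ha; move: (Hlt _ H); rewrite Ha.
have := before_find 0 H; rewrite nth_iota ?add0n ?Ham //; slia.
Qed.

Lemma find_ge (a : pred nat) n m : m <= n -> (forall t, t < m -> ~~ a t) ->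
  m <= find a (iota 0 n).
Proof.
move=> Hmn Hlt; rewrite leqNgt; apply/negP => H.
have Hf : find a (iota 0 n) < size (iota 0 n) by rewrite size_iota; slia.
have Hhas : has a (iota 0 n) by rewrite has_find.
have := nth_find 0 Hhas; rewrite nth_iota ?add0n; last by move: Hf; rewrite size_iota.
by move=> Ha; move: (Hlt _ H); rewrite Ha.
Qed.

Lemma distL_eq N n (Hn : 0 < n) (C : config N n) s u :
  leader (gC Hn C s) -> follow (gC Hn C) s.+1 u -> u < n -> distL C (pos Hn (s + u)) = u.
Proof.
move=> Hs Hf Hu; rewrite /distL; apply: find_eq => //.
  rewrite back_pos; [|slia|slia]; have -> : s + u - u = s by slia.
  by [].
move=> t Ht; rewrite back_pos; [|slia|slia].
have -> : s + u - t = s.+1 + (u - t.+1) by slia.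
by apply: Hf; slia.
Qed.

Lemma init N n (Hn : 0 < n) (C : config N n) : n <= N -> C_NI C ->
  Inv2 (gC Hn C) /\ Inv3 (gC Hn C).
Proof.
move=> HnN [[[j Hj] HPB] [Hsec Hmod]].
have HP := gC_per Hn C.
have Hj' : leader (gC Hn C j) by rewrite gC_ord.
split.
- move=> p [|m] Hf; first by have := ltn_ord (dist (gC Hn C p)); slia.
  have Hp : ~~ leader (gC Hn C p) by have := Hf 0 erefl; rewrite addn0.
  have Hmn : m.+1 <= n.
    rewrite leqNgt; apply/negP => Hlt.
    have [s [d [Hsd Hdn Hs _]]] := left_leader p Hn HP Hj'.
    have := Hf (n - d) ltac:(slia).
    have -> : p + (n - d) = s by slia.
    by rewrite Hs.
  have := Hsec (pos Hn p); rewrite /secure -/(gC Hn C p) (negbTE Hp).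
  have Hge : m.+1 <= distR C (pos Hn p).
    rewrite /distR; apply: find_ge => // t Ht.
    rewrite shift_pos; exact: Hf.
  have Hle : distR C (pos Hn p) <= n by rewrite /distR; have := find_size (fun j => leader (C (shift (pos Hn p) j))) (iota 0 n); rewrite size_iota.
  slia.
- move=> s m Hs Hf Hb.
  have Hmn := follow_lt Hn HP Hs Hf.
  have Hjj := HPB (pos Hn (s + m)) Hb.
  have Hmj := Hmod (pos Hn (s + m)) Hb.
  have HdL := distL_eq Hs Hf Hmn.
  move: Hjj Hmj; rewrite /modest /peaceful HdL => /andP [Hsh /allP Hsg] /andP [_ /allP Hds].
  split.
    by move: Hsh; rewrite back_pos ?addnK //; slia.
  move=> u Hu.
  have Hin : m - u \in iota 0 m.+1 by rewrite mem_iota; slia.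
  have Hbk : back (pos Hn (s + m)) (m - u) = pos Hn (s + u).
    by rewrite back_pos; [congr pos; slia|slia|slia].
  split.
    by have := Hsg _ Hin; rewrite Hbk.
  have := Hds _ Hin; rewrite Hbk.
  have Hfu : follow (gC Hn C) s.+1 u by move=> t Ht; apply: Hf; slia.
  by rewrite (distL_eq Hs Hfu) //; slia.
Qed.

Lemma step_stepG N n (Hn : 0 < n) (D D' : config N n) : step D D' ->
  exists q, q < n /\ stepG n (gC Hn D) (gC Hn D') q.
Proof.
move=> [i Hi]; exists i; split => //.
have Eq1 : D i = gC Hn D i by rewrite gC_ord.
have Eq2 : D (shift i 1) = gC Hn D i.+1.
  by rewrite /gC; congr D; apply: val_inj; rewrite /= addn1.
move=> w; rewrite {1}/gC Hi -Eq1 -Eq2.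
have -> : (pos Hn w == i) = (w %% n == i) by [].
have -> : (pos Hn w == shift i 1) = (w %% n == i.+1 %% n) by rewrite -val_eqE /= addn1.
done.
Qed.

Unset Implicit Arguments.
Theorem lemma7 (N n : nat) (Hn2 : 2 <= n) (HnN : n <= N) (C0 D D' : config N n) :
  C_NI C0 -> reachable C0 D -> step D D' ->
  forall i : 'I_n, ~~ leader (D i) -> ~~ leader (D' i).
Proof.
move=> HNI Hreach Hstep.
have Hn : 0 < n by slia.
have InvD : Inv2 (gC Hn D) /\ Inv3 (gC Hn D).
  elim: Hreach => [|D1 D2 _ [I2 I3] Hst]; first exact: init.
  have [q [Hq HG]] := step_stepG Hn Hst.
  split; [exact: (pres2 Hn2 HnN Hq (gC_per Hn D1) HG I2 I3)
         |exact: (pres3 Hn2 HnN Hq (gC_per Hn D1) HG I2 I3)].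
have [I2 I3] := InvD.
have [q [Hq HG]] := step_stepG Hn Hstep.
have HP := gC_per Hn D.
have NN := nonew q Hn2 HnN HP I2.
move=> x Hx.
rewrite -(gC_ord Hn D') HG; rewrite -(gC_ord Hn D) in Hx.
case: ifP => E1.
  by rewrite D_leader_l -(stepG_Gl Hq HP (eqP E1)).
case: ifP => E2 //.
rewrite D_leader_r // -(@stepG_Gr n N (gC Hn D) q x HP (eqP E2)).
by rewrite (negbTE Hx).
Qed.
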